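(* Let $r\in\{1,\infty\}$ and let $N_1,\ldots,N_s\geqslant2$ be pairwise coprime integers with $N=N_1\cdots N_s$. Then $\mathbb{G}_r(N)$ and $\mathbb{G}_r(N_1)\times\cdots\times\mathbb{G}_r(N_s)$ are isomorphic as topological groups.
   Context: All groups are Abelian. A value on $G$ is $p\colon G\to[0,\infty)$ with $p(x)=0\iff x=0$, $p(-x)=p(x)$, $p(x+y)\leqslant p(x)+p(y)$; it induces the metric $p(x-y)$. Class $\mathcal{O}_0$: $\lim_n p(na)/n=0$ for all $a$. $\mathfrak{G}_r(N)$: separable valued Abelian groups of class $\mathcal{O}_0$ with $p\leqslant r$ (vacuous if $r=\infty$) and of exponent $N$ if $N\neq0$. $\mathbb{G}_r(N)$ is the valued Abelian group, unique up to isometric group isomorphism, which (G1) is complete and in $\mathfrak{G}_r(N)$; (G2) for every finite valued Abelian group $(H,+,q)$ (of exponent $N$ if $N\neq0$) with $q\leqslant r$, subgroup $K$, isometric homomorphism $\varphi\colon K\to\mathbb{G}_r(N)$ and $\varepsilon\in(0,1)$, there is a homomorphism $\varphi_\varepsilon\colon H\to\mathbb{G}_r(N)$ with $p(\varphi(x)-\varphi_\varepsilon(x))\leqslant\varepsilon$ on $K$ and $(1-\varepsilon)q\leqslant p\circ\varphi_\varepsilon\leqslant(1+\varepsilon)q$ on $H$; (G3) if $N=0$, finite-order elements are dense. *)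

(* Defs.v *)
From HB Require Import structures.
From mathcomp Require Import all_boot all_order all_algebra.
From mathcomp Require Import Rstruct.
Notation R := Rdefinitions.R.
Set Implicit Arguments. Unset Strict Implicit. Unset Printing Implicit Defensive.
Import Order.TTheory GRing.Theory Num.Theory.
Local Open Scope ring_scope.

Definition is_value (G : zmodType) (p : G -> R) : Prop :=
  [/\ (forall x, 0 <= p x),
      (forall x, p x = 0 <-> x = 0),
      (forall x, p (- x) = p x) &
      (forall x y, p (x + y) <= p x + p y)].

(* the bound "p <= r"; r = None encodes r = +oo (vacuous) *)
Definition bounded_by (r : option R) (x : R) : Prop :=
  match r with Some b => x <= b | None => True end.

Definition class_O0 (G : zmodType) (p : G -> R) : Prop :=
  forall a : G, forall eps : R, 0 < eps ->
    exists M : nat, forall n : nat, (M <= n)%N ->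
      `|p (a *+ n) / n%:R - 0| < eps.

Definition separable (G : zmodType) (p : G -> R) : Prop :=
  exists d : nat -> G, forall x : G, forall eps : R, 0 < eps ->
    exists n, p (x - d n) < eps.

Definition complete (G : zmodType) (p : G -> R) : Prop :=
  forall u : nat -> G,
    (forall eps : R, 0 < eps -> exists M : nat, forall m n : nat,
        (M <= m)%N -> (M <= n)%N -> p (u m - u n) < eps) ->
    exists l : G, forall eps : R, 0 < eps -> exists M : nat, forall n : nat,
        (M <= n)%N -> p (u n - l) < eps.

Definition exponent_cond (G : zmodType) (N : nat) : Prop :=
  N <> 0%N -> forall x : G, x *+ N = 0.

Definition in_frakG (r : option R) (N : nat) (G : zmodType) (p : G -> R) : Prop :=
  [/\ is_value p, separable p, class_O0 p,
      (forall x, bounded_by r (p x)) & exponent_cond G N].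

(* (G1), (G2), (G3): characterization of GG_r(N) (unique up to isometric
   group isomorphism) *)
Definition is_GG (r : option R) (N : nat) (G : zmodType) (p : G -> R) : Prop :=
  [/\ complete p /\ in_frakG r N p,
      (forall (H : finZmodType) (q : H -> R),
          is_value q -> exponent_cond H N -> (forall x, bounded_by r (q x)) ->
          forall (K : {set H}),
            (0 \in K) -> (forall x y, x \in K -> y \in K -> x - y \in K) ->
          forall phi : H -> G,
            (forall x y, x \in K -> y \in K -> phi (x + y) = phi x + phi y) ->
            (forall x y, x \in K -> y \in K -> p (phi x - phi y) = q (x - y)) ->
          forall eps : R, 0 < eps < 1 ->
          exists phi_e : H -> G,
            [/\ (forall x y, phi_e (x + y) = phi_e x + phi_e y),
                (forall x, x \in K -> p (phi x - phi_e x) <= eps) &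
                (forall x, (1 - eps) * q x <= p (phi_e x) /\
                           p (phi_e x) <= (1 + eps) * q x)]) &
      (N = 0%N -> forall x : G, forall eps : R, 0 < eps ->
          exists y : G, (exists n : nat, (0 < n)%N /\ y *+ n = 0) /\
                        p (x - y) < eps)].

(* Isomorphism of topological groups between (G,p) (metric topology) and the
   finite product prod_i Gs i with the product topology; for a finite product
   the boxes {z | forall i, ps i (z i - y i) < d} form a neighbourhood base
   at y of the product topology. *)
Definition top_group_iso (G : zmodType) (p : G -> R) (s : nat)
    (Gs : 'I_s -> zmodType) (ps : forall i, Gs i -> R) : Prop :=
  exists (f : G -> forall i, Gs i) (g : (forall i, Gs i) -> G),
    [/\ (forall x y i, f (x + y) i = f x i + f y i),
        cancel f g, cancel g f,
        (forall x : G, forall eps : R, 0 < eps -> exists2 d : R, 0 < d &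
           forall y : G, p (y - x) < d -> forall i, ps i (f y i - f x i) < eps) &
        (forall y : (forall i, Gs i), forall eps : R, 0 < eps -> exists2 d : R, 0 < d &
           forall z : (forall i, Gs i),
             (forall i, ps i (z i - y i) < d) -> p (g z - g y) < eps)].

(* Main.v *)
From HB Require Import structures.
From mathcomp Require Import all_boot all_order all_algebra.
From mathcomp Require Import Rstruct.
From mathcomp Require Import ring lra zify.
From Stdlib Require Import ClassicalEpsilon Classical FunctionalExtensionality.
Require Import Defs.
Set Implicit Arguments. Unset Strict Implicit. Unset Printing Implicit Defensive.
Import Order.TTheory GRing.Theory Num.Theory.
Local Open Scope ring_scope.


Section Value.
Variables (G : zmodType) (p : G -> R) (hp : is_value p).
Lemma vp_ge0 x : 0 <= p x. Proof. by case: hp. Qed.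
Lemma vp0 : p 0 = 0. Proof. by case: hp => _ h _ _; apply/h. Qed.
Lemma vp_eq0 x : p x = 0 -> x = 0. Proof. by case: hp => _ h _ _; move/h. Qed.
Lemma vpN x : p (- x) = p x. Proof. by case: hp. Qed.
Lemma vpD x y : p (x + y) <= p x + p y. Proof. by case: hp. Qed.
Lemma vpB x y : p (x - y) <= p x + p y. Proof. by rewrite -(vpN y) vpD. Qed.
Lemma vp_sym x y : p (x - y) = p (y - x). Proof. by rewrite -vpN opprB. Qed.
Lemma vp_tri x y z : p (x - z) <= p (x - y) + p (y - z).
Proof. have -> : x - z = (x - y) + (y - z) by rewrite addrA subrK. exact: vpD. Qed.
Lemma vp_lip1 x y : p x - p y <= p (x - y).
Proof. have := vpD (x - y) y; rewrite subrK; lra. Qed.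
Lemma vp_lip x y : `|p x - p y| <= p (x - y).
Proof. rewrite ler_norml vp_lip1 andbT. have := vp_lip1 y x; rewrite vp_sym; lra. Qed.
Lemma vp_mulrn x n : p (x *+ n) <= n%:R * p x.
Proof.
elim: n => [|n IH]; first by rewrite mulr0n vp0 mul0r.
rewrite mulrSr -natr1 mulrDl mul1r; apply: le_trans (vpD _ _) _; lra.
Qed.
End Value.

Section MinMax.
Variables (I : eqType).
Definition fmin (T : R) (F : I -> R) (s : seq I) := foldr (fun x acc => Num.min (F x) acc) T s.
Definition fmax (F : I -> R) (s : seq I) := foldr (fun x acc => Num.max (F x) acc) 0 s.
Lemma fmin_leT T F s : fmin T F s <= T.
Proof. elim: s => //= x s IH; by rewrite ge_min IH orbT. Qed.
Lemma fmin_le T F s x : x \in s -> fmin T F s <= F x.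
Proof.
elim: s => //= y s IH; rewrite inE => /orP [/eqP ->|h]; first by rewrite ge_min lexx.
by rewrite ge_min IH ?orbT.
Qed.
Lemma fmin_ge T F s m : m <= T -> (forall x, x \in s -> m <= F x) -> m <= fmin T F s.
Proof.
move=> hT; elim: s => //= y s IH h; rewrite le_min h ?mem_head //= IH // => x hx.
by apply: h; rewrite inE hx orbT.
Qed.
Lemma fmin_att T F s : fmin T F s = T \/ exists2 x, x \in s & fmin T F s = F x.
Proof.
elim: s => [|y s IH] /=; first by left.
case: (leP (F y) (fmin T F s)) => h.
- by right; exists y; rewrite ?mem_head.
- case: IH => [->|[x hx ->]]; first by left.
  by right; exists x => //; rewrite inE hx orbT.
Qed.
Lemma fmax_ge F s x : x \in s -> F x <= fmax F s.
Proof.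
elim: s => //= y s IH; rewrite inE => /orP [/eqP ->|h]; first by rewrite le_max lexx.
by rewrite le_max IH ?orbT.
Qed.
Lemma fmax_ge0 F s : 0 <= fmax F s.
Proof. elim: s => //= y s IH; by rewrite le_max IH orbT. Qed.
End MinMax.

Definition subg (G : zmodType) (A : seq G) :=
  0 \in A /\ forall x y, x \in A -> y \in A -> x - y \in A.
Definition additive_on (G G' : zmodType) (A : seq G) (f : G -> G') :=
  forall x y, x \in A -> y \in A -> f (x + y) = f x + f y.

Section SubgLemmas.
Variables (G G' : zmodType) (A : seq G) (hA : subg A).
Lemma subgN x : x \in A -> - x \in A.
Proof. case: hA => h0 hB hx. by have := hB _ _ h0 hx; rewrite add0r. Qed.
Lemma subgD x y : x \in A -> y \in A -> x + y \in A.
Proof. case: hA => h0 hB hx hy. by rewrite -[y]opprK; apply: hB => //; apply: subgN. Qed.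
Variables (f : G -> G') (hf : additive_on A f).
Lemma addf0 : f 0 = 0.
Proof. case: hA => h0 _. have h := hf h0 h0; rewrite addr0 in h. by apply: (addrI (f 0)); rewrite addr0 -h. Qed.
Lemma addfN x : x \in A -> f (- x) = - f x.
Proof. move=> hx; have h := hf hx (subgN hx); rewrite subrr addf0 in h. by apply/eqP; rewrite -addr_eq0 addrC -h. Qed.
Lemma addfB x y : x \in A -> y \in A -> f (x - y) = f x - f y.
Proof. move=> hx hy; by rewrite hf ?subgN // addfN. Qed.
End SubgLemmas.


Lemma mulrn_mod (G : zmodType) (M : nat) (x : G) n : x *+ M = 0 -> x *+ n = x *+ (n %% M).
Proof.
move=> hx; rewrite {1}(divn_eq n M) mulrnDr mulnC mulrnA hx.
by rewrite mul0rn add0r.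
Qed.

Section Gen.
Variables (G : zmodType) (M : nat) (S : G -> Prop).
Hypotheses (hM : (1 < M)%N) (S0 : S 0) (SB : forall x y, S x -> S y -> S (x - y))
  (Stor : forall x, S x -> x *+ M = 0).

Lemma SN x : S x -> S (- x). Proof. by move=> h; have := SB S0 h; rewrite add0r. Qed.
Lemma SD x y : S x -> S y -> S (x + y).
Proof. by move=> hx hy; rewrite -[y]opprK; apply: SB => //; apply: SN. Qed.
Lemma SMn x n : S x -> S (x *+ n).
Proof. move=> hx; elim: n => [|n IH]; [by rewrite mulr0n | by rewrite mulrS; apply: SD]. Qed.

Definition gen (l : seq G) : seq G :=
  foldr (fun x acc => [seq y + x *+ i | y <- acc, i <- iota 0 M]) [:: 0] l.

Lemma gen_cons x l z : z \in gen (x :: l) <-> exists y i, [/\ y \in gen l, (i < M)%N & z = y + x *+ i].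
Proof.
rewrite /=; split.
- case/allpairsP => [[y i] /= [hy hi ->]]; exists y, i; split => //.
  by move: hi; rewrite mem_iota add0n.
- case=> y [i [hy hi ->]]; apply/allpairsP; exists (y, i) => /=; split => //.
  by rewrite mem_iota add0n.
Qed.

Lemma gen_prop l : (forall x, x \in l -> S x) ->
  [/\ subg (gen l), (forall z, z \in gen l -> S z) & {subset l <= gen l}].
Proof.
elim: l => [|x l IH] hl.
  split => //; first by split => [|a b]; rewrite ?inE // => /eqP -> /eqP ->; rewrite subrr.
  by move=> z; rewrite inE => /eqP ->.
have Sx : S x by apply: hl; rewrite mem_head.
have [[g0 gB] gS gsub] := IH (fun y hy => hl y (mem_behead (s:=x::l) hy)).
have Mpos : (0 < M)%N by apply: ltnW.
split.
- split.
  + apply/gen_cons; exists 0, 0%N; split => //; by rewrite mulr0n addr0.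
  + move=> a b /gen_cons [y [i [hy hi ->]]] /gen_cons [y' [i' [hy' hi' ->]]].
    apply/gen_cons; exists (y - y'), ((i + (M - i')) %% M)%N; split.
    * exact: gB.
    * by rewrite ltn_mod.
    * rewrite -mulrn_mod ?Stor // mulrnDr.
      have -> : x *+ (M - i') = - (x *+ i').
        apply/eqP; rewrite -addr_eq0 -mulrnDr subnK ?Stor //; exact: ltnW.
      by rewrite opprD addrACA.
- move=> z /gen_cons [y [i [hy hi ->]]]; apply: SD; [exact: gS | exact: SMn].
- move=> z; rewrite inE => /orP [/eqP ->|hz].
  + apply/gen_cons; exists 0, 1%N; split => //; by rewrite add0r.
  + apply/gen_cons; exists z, 0%N; split => //; [exact: gsub | by rewrite addr0].
Qed.
End Gen.


Section Sub.
Variables (G : zmodType) (s : seq G) (s0 : 0 \in s) (sB : forall x y, x \in s -> y \in s -> x - y \in s).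
Definition subT_ (_ : 0 \in s) (_ : forall x y, x \in s -> y \in s -> x - y \in s) := seq_sub s.
Local Notation subT := (subT_ s0 sB).
HB.instance Definition _ := Finite.copy subT (seq_sub s).
Let hs : subg s := conj s0 sB.
Definition sadd (x y : subT) : subT := SeqSub (subgD hs (ssvalP x) (ssvalP y)).
Definition sopp (x : subT) : subT := SeqSub (subgN hs (ssvalP x)).
Definition szero : subT := SeqSub s0.
Lemma saddA : associative sadd. Proof. move=> x y z; apply: val_inj => /=; exact: addrA. Qed.
Lemma saddC : commutative sadd. Proof. move=> x y; apply: val_inj => /=; exact: addrC. Qed.
Lemma sadd0 : left_id szero sadd. Proof. move=> x; apply: val_inj => /=; exact: add0r. Qed.
Lemma saddN : left_inverse szero sopp sadd. Proof. move=> x; apply: val_inj => /=; exact: addNr. Qed.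
HB.instance Definition _ := GRing.isZmodule.Build subT saddA saddC sadd0 saddN.
Lemma val_subMn (x : subT) n : val (x *+ n) = val x *+ n.
Proof. elim: n => [|n IH] //; by rewrite !mulrS /= IH. Qed.
End Sub.

Section PT.
Variables (A B : finZmodType).
Definition pT := (A * B)%type.
HB.instance Definition _ := GRing.Zmodule.copy pT (A * B)%type.
HB.instance Definition _ := Finite.copy pT (A * B)%type.
Lemma pT_Mn1 (x : pT) n : (x *+ n).1 = x.1 *+ n.
Proof. elim: n => [|n IH] //; by rewrite !mulrS /= IH. Qed.
Lemma pT_Mn2 (x : pT) n : (x *+ n).2 = x.2 *+ n.
Proof. elim: n => [|n IH] //; by rewrite !mulrS /= IH. Qed.
End PT.

Definition cauchy (G : zmodType) (p : G -> R) (u : nat -> G) :=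
  forall eps, 0 < eps -> exists M, forall m n, (M <= m)%N -> (M <= n)%N -> p (u m - u n) < eps.
Definition conv (G : zmodType) (p : G -> R) (u : nat -> G) l :=
  forall eps, 0 < eps -> exists M, forall n, (M <= n)%N -> p (u n - l) < eps.

Record good (r : option R) (M : nat) (G : zmodType) (p : G -> R) (S : G -> Prop) : Prop := Good {
  g_val : is_value p;
  g_S0 : S 0;
  g_SB : forall x y, S x -> S y -> S (x - y);
  g_tor : forall x, S x -> x *+ M = 0;
  g_bd : forall x, bounded_by r (p x);
  g_dense : exists d : nat -> G, (forall n, S (d n)) /\
      (forall x, S x -> forall eps, 0 < eps -> exists n, p (x - d n) < eps);
  g_comp : forall u, (forall n, S (u n)) -> cauchy p u -> exists2 l, S l & conv p u l;
  g_G2 : forall (H : finZmodType) (q : H -> R), is_value q -> exponent_cond H M ->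
     (forall x, bounded_by r (q x)) ->
     forall K : {set H}, 0 \in K -> (forall x y, x \in K -> y \in K -> x - y \in K) ->
     forall phi : H -> G,
       (forall x y, x \in K -> y \in K -> phi (x + y) = phi x + phi y) ->
       (forall x y, x \in K -> y \in K -> p (phi x - phi y) = q (x - y)) ->
     forall eps : R, 0 < eps < 1 ->
     exists phi_e : H -> G,
       [/\ (forall x y, phi_e (x + y) = phi_e x + phi_e y), (forall x, S (phi_e x)),
           (forall x, x \in K -> p (phi x - phi_e x) <= eps) &
           (forall x, (1 - eps) * q x <= p (phi_e x) /\ p (phi_e x) <= (1 + eps) * q x)]
}.

Section Step.
Variables (r : option R) (hr : r = Some 1 \/ r = None) (M : nat) (hM : (1 < M)%N).
Variables (G : zmodType) (p : G -> R) (S : G -> Prop) (X : good r M p S).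
Variables (G' : zmodType) (p' : G' -> R) (T : G' -> Prop) (Y : good r M p' T).

Lemma step (A : seq G) (C : seq G') (hA : subg A) (hC : subg C)
  (AS : forall a, a \in A -> S a) (CT : forall c, c \in C -> T c)
  (f : G -> G') (fadd : additive_on A f) (fAC : forall a, a \in A -> f a \in C)
  (delta : R) (hdelta : 0 < delta) (fapp : forall a, a \in A -> `|p' (f a) - p a| <= delta)
  (eps : R) (heps : 0 < eps) :
  exists g : G' -> G, [/\ additive_on C g, (forall c, c \in C -> S (g c)),
     (forall c, c \in C -> `|p (g c) - p' c| <= eps) &
     (forall a, a \in A -> p (g (f a) - a) <= 2 * delta + eps)].
Proof.
have hp := g_val X; have hp' := g_val Y.
pose Tb := match r with Some b => b | None => 1 + fmax p A + fmax p' C end.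
have Tpos : 0 < Tb.
  rewrite /Tb; case: hr => ->; first by lra.
  have := fmax_ge0 p A; have := fmax_ge0 p' C; lra.
have TA : forall a, a \in A -> p a <= Tb.
  move=> a ha; rewrite /Tb; move: (g_bd X a); case: hr => -> //= _.
  have := fmax_ge p ha; have := fmax_ge0 p' C; lra.
have TC : forall c, c \in C -> p' c <= Tb.
  move=> c hc; rewrite /Tb; move: (g_bd Y c); case: hr => -> //= _.
  have := fmax_ge p' hc; have := fmax_ge0 p A; lra.
have Tbd : forall y, y <= Tb -> bounded_by r y.
  by rewrite /Tb; case: hr => -> //.
case: (hA) => hA0 hAB; case: (hC) => hC0 hCB.
pose sA := subT_ hA0 hAB; pose sC := subT_ hC0 hCB.
pose HH := pT sA sC.
have f0 : f 0 = 0 := addf0 hA fadd.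
pose term (h : HH) (x : G) := p (val h.1 - x) + p' (val h.2 + f x) + (if x == 0 then 0 else delta).
pose q (h : HH) := fmin Tb (term h) A.
have term_ge0 : forall h x, 0 <= term h x.
  move=> h x; rewrite /term; have := vp_ge0 hp (val h.1 - x); have := vp_ge0 hp' (val h.2 + f x).
  case: (x == 0); lra.
have q_ge0 : forall h, 0 <= q h by move=> h; apply: fmin_ge => //; exact: ltW.
have q_leT : forall h, q h <= Tb by move=> h; exact: fmin_leT.
have q0 : q 0 = 0.
  apply: le_anti; rewrite q_ge0 andbT; apply: le_trans (fmin_le _ _ hA0) _.
  by rewrite /term /= eqxx subrr addr0 f0 addr0 (vp0 hp) (vp0 hp') addr0.
have q_pos : forall h, q h = 0 -> h = 0.
  move=> [u v]; rewrite /q.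
  case: (fmin_att Tb (term (u, v)) A) => [->|[x hx ->]]; first by move=> h; exfalso; lra.
  rewrite /term /=.
  have h1 := vp_ge0 hp (val u - x); have h2 := vp_ge0 hp' (val v + f x).
  case: (eqVneq x 0) => [->|hx0]; last by move=> e; exfalso; lra.
  rewrite subr0 f0 addr0 addr0 => e.
  have h3 := vp_ge0 hp (val u); have h4 := vp_ge0 hp' (val v).
  have e1 : p (val u) = 0 by lra.
  have e2 : p' (val v) = 0 by lra.
  have -> : u = 0 by apply: val_inj; exact: (vp_eq0 hp).
  have -> : v = 0 by apply: val_inj; exact: (vp_eq0 hp').
  by [].
have qN_le : forall h, q (- h) <= q h.
  move=> h; case: (fmin_att Tb (term h) A) => [e|[x hx e]]; have {}e : q h = _ := e; rewrite e; first exact: q_leT.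
  apply: le_trans (fmin_le _ _ (subgN hA hx)) _.
  rewrite /term /= (addfN hA fadd hx) oppr_eq0.
  have -> : - ssval h.1 - - x = - (ssval h.1 - x) by rewrite opprB opprK addrC.
  have -> : - ssval h.2 - f x = - (ssval h.2 + f x) by rewrite opprD.
  by rewrite (vpN hp) (vpN hp').
have qN : forall h, q (- h) = q h.
  by move=> h; apply: le_anti; rewrite qN_le /= -{1}[h]opprK qN_le.
have qD : forall h1 h2, q (h1 + h2) <= q h1 + q h2.
  move=> h1 h2.
  case: (fmin_att Tb (term h1) A) => [e1|[x1 hx1 e1]]; have {}e1 : q h1 = _ := e1.
    have := q_leT (h1 + h2); have := q_ge0 h2; lra.
  case: (fmin_att Tb (term h2) A) => [e2|[x2 hx2 e2]]; have {}e2 : q h2 = _ := e2.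
    have := q_leT (h1 + h2); have := q_ge0 h1; lra.
  rewrite e1 e2.
  apply: le_trans (fmin_le _ _ (subgD hA hx1 hx2)) _.
  rewrite /term /= fadd //.
  have e3 : val h1.1 + val h2.1 - (x1 + x2) = (val h1.1 - x1) + (val h2.1 - x2).
    by rewrite opprD addrACA.
  have e4 : val h1.2 + val h2.2 + (f x1 + f x2) = (val h1.2 + f x1) + (val h2.2 + f x2).
    by rewrite addrACA.
  rewrite e3 e4.
  have := vpD hp (val h1.1 - x1) (val h2.1 - x2).
  have := vpD hp' (val h1.2 + f x1) (val h2.2 + f x2).
  case: (eqVneq x1 0) => [->|_]; case: (eqVneq x2 0) => [->|_];
    rewrite ?addr0 ?eqxx //=; try (case: (_ == 0)); lra.
have qv : is_value q.
  split; [exact: q_ge0 | move=> h; split; [exact: q_pos | by move=> ->] | exact: qN | exact: qD].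
have qA : forall u : sA, q (u, 0) = p (val u).
  move=> u; apply: le_anti; apply/andP; split.
    apply: le_trans (fmin_le _ _ hA0) _.
    by rewrite /term /= eqxx subr0 f0 !addr0 (vp0 hp') addr0.
  apply: fmin_ge; first by apply: TA; exact: ssvalP.
  move=> x hx; rewrite /term /= add0r.
  case: (eqVneq x 0) => [->|hx0]; first by rewrite subr0 f0 !addr0 (vp0 hp') addr0.
  have := vpD hp (val u - x) x; rewrite subrK.
  have := fapp _ hx; rewrite ler_norml => /andP [h1 h2]; lra.
have qC : forall v : sC, q (0, v) = p' (val v).
  move=> v; apply: le_anti; apply/andP; split.
    apply: le_trans (fmin_le _ _ hA0) _.
    by rewrite /term /= eqxx subr0 f0 addr0 (vp0 hp) !addr0 add0r.
  apply: fmin_ge; first by apply: TC; exact: ssvalP.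
  move=> x hx; rewrite /term /= add0r.
  case: (eqVneq x 0) => [->|hx0]; first by rewrite oppr0 f0 (vp0 hp) !addr0 add0r.
  have := vpB hp' (val v + f x) (f x); rewrite addrK vpN //.
  have := fapp _ hx; rewrite ler_norml => /andP [h1 h2]; lra.
pose iA (a : G) : sA := insubd (0 : sA) a.
pose iC (c : G') : sC := insubd (0 : sC) c.
have iAK : forall a, a \in A -> val (iA a) = a by move=> a ha; rewrite /iA insubdK.
have iCK : forall c, c \in C -> val (iC c) = c by move=> c hc; rewrite /iC insubdK.
have q_small : forall a, a \in A -> q (- iA a, iC (f a)) <= delta.
  move=> a ha; apply: le_trans (fmin_le _ _ (subgN hA ha)) _.
  rewrite /term /= iAK // iCK ?fAC // subrr (addfN hA fadd ha) subrr (vp0 hp) (vp0 hp') !add0r.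
  by case: (_ == 0); lra.
pose K : {set HH} := [set h : HH | h.2 == 0].
have K0 : (0 : HH) \in K by rewrite inE.
have KB : forall x y, x \in K -> y \in K -> x - y \in K.
  by move=> [x1 x2] [y1 y2]; rewrite !inE /= => /eqP -> /eqP ->; rewrite subrr.
pose phi (h : HH) : G := val h.1.
have phiadd : forall x y, x \in K -> y \in K -> phi (x + y) = phi x + phi y by [].
have phiiso : forall x y, x \in K -> y \in K -> p (phi x - phi y) = q (x - y).
  move=> [x1 x2] [y1 y2]; rewrite !inE /= => /eqP -> /eqP ->.
  change (p (val x1 - val y1) = q (x1 - y1, 0 - 0)); by rewrite subrr qA.
have expH : exponent_cond HH M.
  move=> _ h; rewrite [h *+ M]surjective_pairing pT_Mn1 pT_Mn2.
  have -> : h.1 *+ M = 0.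
    apply: val_inj; rewrite val_subMn /=; apply: (g_tor X); apply: AS; exact: ssvalP.
  have -> : h.2 *+ M = 0.
    apply: val_inj; rewrite val_subMn /=; apply: (g_tor Y); apply: CT; exact: ssvalP.
  by [].
pose e' := Num.min (1 / 2) (eps / (Tb + 1)).
have Tb1 : 0 < Tb + 1 by lra.
have ed : 0 < eps / (Tb + 1) by apply: divr_gt0.
have e'pos : 0 < e' by rewrite lt_min ed andbT; lra.
have e'half : e' <= 1 / 2 by rewrite ge_min lexx.
have e'd : e' <= eps / (Tb + 1) by rewrite ge_min lexx orbT.
have edle : eps / (Tb + 1) <= eps.
  rewrite ler_pdivrMr //; nra.
have e'eps : e' <= eps by apply: le_trans e'd edle.
have e'T : forall y, 0 <= y -> y <= Tb -> e' * y <= eps.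
  move=> y y0 yT; apply: le_trans (_ : eps / (Tb + 1) * (Tb + 1) <= eps).
    apply: le_trans (_ : eps / (Tb + 1) * y <= _); first by apply: ler_wpM2r.
    apply: ler_wpM2l; [exact: ltW | lra].
  by rewrite divfK //; apply: lt0r_neq0.
have e'01 : 0 < e' < 1 by apply/andP; split; lra.
have [phi_e [phadd phS phclose phapp]] :=
  g_G2 X qv expH (fun h => Tbd _ (q_leT h)) K0 KB phiadd phiiso e'01.
exists (fun c => phi_e (0, iC c)); split.
- move=> c c' hc hc'.
  have -> : iC (c + c') = iC c + iC c'.
    by apply: val_inj; rewrite /= !iCK // subgD.
  rewrite -phadd; congr phi_e.
  change ((0, iC c + iC c') = ((0:sA) + 0, iC c + iC c')); by rewrite addr0.
- by move=> c _; apply: phS.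
- move=> c hc; have [h1 h2] := phapp (0, iC c); rewrite qC iCK // in h1 h2.
  have := e'T _ (vp_ge0 hp' c) (TC _ hc) => hh; rewrite ler_norml; apply/andP; split; nra.
- move=> a ha.
  have e1 : ((0 : sA), iC (f a)) = (- iA a, iC (f a)) + (iA a, 0).
    by change (((0 : sA), iC (f a)) = (- iA a + iA a, iC (f a) + 0)); rewrite addNr addr0.
  rewrite e1 phadd.
  have -> : phi_e (- iA a, iC (f a)) + phi_e (iA a, 0) - a
     = phi_e (- iA a, iC (f a)) + (phi_e (iA a, 0) - a) by rewrite addrA.
  apply: le_trans (vpD hp _ _) _.
  have [_ h2] := phapp (- iA a, iC (f a)).
  have h3 := q_small _ ha.
  have h4 := q_ge0 (- iA a, iC (f a)).
  have h5 : (iA a, 0) \in K by rewrite inE.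
  have := phclose _ h5; rewrite /phi /= iAK // vp_sym // => h6.
  nra.
Qed.
End Step.


Definition eps_ (k : nat) : R := (1 / 2) ^+ k.
Lemma eps_gt0 k : 0 < eps_ k.
Proof. rewrite /eps_; apply: exprn_gt0; lra. Qed.
Lemma eps_S k : eps_ k.+1 = eps_ k / 2.
Proof. by rewrite /eps_ exprSr mulrA mulr1. Qed.
Lemma eps_le k m : (k <= m)%N -> eps_ m <= eps_ k.
Proof.
elim: m => [|m IH]; first by rewrite leqn0 => /eqP ->.
rewrite leq_eqVlt => /orP [/eqP <- //|]; rewrite ltnS => /IH h.
rewrite eps_S; have := eps_gt0 m; lra.
Qed.
Lemma eps_0 : eps_ 0 = 1. Proof. by []. Qed.
Lemma eps_bound k : (k.+1)%:R * eps_ k <= 1.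
Proof.
elim: k => [|k IH]; first by rewrite eps_0 mulr1.
rewrite eps_S; have := eps_gt0 k => h.
have -> : (k.+2%:R : R) = k.+1%:R + 1 by rewrite -natr1.
have ha : (1 : R) <= k.+1%:R by rewrite ler1n.
move: IH; set a := (k.+1%:R : R) => IH.
nra.
Qed.
Lemma eps_small e : 0 < e -> exists k, eps_ k < e.
Proof.
move=> he; have h0 : 0 <= 1 / e by apply: divr_ge0; lra.
have := archi_boundP h0; set n := Num.bound _ => hn.
exists n; have := eps_bound n; have := eps_gt0 n; rewrite -natr1.
rewrite ltr_pdivrMr // in hn => h1 h2; nra.
Qed.

Lemma close_eq (a b : R) : (forall e, 0 < e -> a <= b + e) -> a <= b.
Proof.
move=> h; rewrite leNgt; apply/negP => hab.
have := h ((a - b) / 2); rewrite divr_gt0 //; last by lra.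
move/(_ isT); lra.
Qed.

Lemma close_eq_m (a b : R) (C : R) : 0 < C -> (forall e, 0 < e -> a <= b + C * e) -> a <= b.
Proof.
move=> hC h; apply: close_eq => e he.
have := h (e / C) (divr_gt0 he hC); by rewrite mulrC divfK ?lt0r_neq0.
Qed.

Section AddP.
Variables (G G' : zmodType) (S : G -> Prop) (S0 : S 0) (SB : forall x y, S x -> S y -> S (x - y)).
Variables (F : G -> G') (Fadd : forall x y, S x -> S y -> F (x + y) = F x + F y).
Lemma addP0 : F 0 = 0.
Proof. have h := Fadd S0 S0; rewrite addr0 in h. by apply: (addrI (F 0)); rewrite addr0 -h. Qed.
Lemma addPN x : S x -> F (- x) = - F x.
Proof.
move=> hx; have hNx : S (- x) by have := SB S0 hx; rewrite add0r.
have h := Fadd hx hNx; rewrite subrr addP0 in h.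
by apply/eqP; rewrite -addr_eq0 addrC -h.
Qed.
Lemma addPB x y : S x -> S y -> F (x - y) = F x - F y.
Proof.
move=> hx hy; have hNy : S (- y) by have := SB S0 hy; rewrite add0r.
by rewrite Fadd // addPN.
Qed.
End AddP.

Section Chain.
Variables (G G' : zmodType) (p : G -> R) (p' : G' -> R) (S : G -> Prop) (T : G' -> Prop).
Variables (A : nat -> seq G) (f : nat -> G -> G') (B : nat -> seq G') (h : nat -> G' -> G).
Record chain : Prop := Chain {
 c_A : forall k, subg (A k);
 c_AS : forall k a, a \in A k -> S a;
 c_B : forall k, subg (B k);
 c_BT : forall k b, b \in B k -> T b;
 c_Anest : forall k, {subset A k <= A k.+1};
 c_Bnest : forall k, {subset B k <= B k.+1};
 c_fadd : forall k, additive_on (A k) (f k);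
 c_fAB : forall k a, a \in A k -> f k a \in B k;
 c_fapp : forall k a, a \in A k -> `|p' (f k a) - p a| <= eps_ k;
 c_hadd : forall k, additive_on (B k) (h k);
 c_hBA : forall k b, b \in B k -> h k b \in A k.+1;
 c_happ : forall k b, b \in B k -> `|p (h k b) - p' b| <= eps_ k;
 c_hf : forall k a, a \in A k -> p (h k (f k a) - a) <= 3 * eps_ k;
 c_fh : forall k b, b \in B k -> p' (f k.+1 (h k b) - b) <= 3 * eps_ k;
 c_Adense : forall x, S x -> forall e, 0 < e -> exists k, exists2 a, a \in A k & p (x - a) < e;
 c_Bdense : forall y, T y -> forall e, 0 < e -> exists k, exists2 b, b \in B k & p' (y - b) < e
}.
End Chain.

Lemma chain_shift (G G' : zmodType) (p : G -> R) (p' : G' -> R) (S : G -> Prop) (T : G' -> Prop)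
  A f B h : chain p p' S T A f B h ->
  chain p' p T S B h (fun k => A k.+1) (fun k => f k.+1).
Proof.
case=> cA cAS cB cBT cAn cBn cfadd cfAB cfapp chadd chBA chapp chf cfh cAd cBd.
split => //.
- by move=> k; apply: cAS.
- by move=> k; apply: cfAB.
- move=> k a ha; apply: le_trans (cfapp _ _ ha) _; apply: eps_le; exact: leqnSn.
- move=> k a ha; apply: le_trans (chf _ _ ha) _; have := eps_le (leqnSn k); lra.
- move=> x hx e he; have [k [a ha hxa]] := cAd x hx e he.
  by exists k; exists a => //; apply: cAn.
Qed.


Lemma fchoice (X Y : Type) (P : X -> Y -> Prop) :
  (forall x, exists y, P x y) -> exists F : X -> Y, forall x, P x (F x).
Proof.
move=> H; exists (fun x => proj1_sig (constructive_indefinite_description _ (H x))).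
move=> x; exact: proj2_sig (constructive_indefinite_description _ (H x)).
Qed.

Lemma I1 (G : zmodType) (x1 x2 y1 y2 : G) : (x1 - x2) - (y1 - y2) = (x1 - y1) - (x2 - y2).
Proof. by rewrite !opprB addrACA [RHS]addrACA [- x2 + _]addrC. Qed.
Lemma I3 (G : zmodType) (x1 x2 x3 y1 y2 y3 : G) :
  x1 + x2 - x3 = (y1 + y2 - y3) + ((x1 - y1) + (x2 - y2) - (x3 - y3)).
Proof.
have e : (x1 - y1) + (x2 - y2) - (x3 - y3) = (x1 + x2 - x3) - (y1 + y2 - y3).
  by rewrite [RHS]I1; congr (_ - _); rewrite opprD addrACA.
by rewrite e subrKC.
Qed.

Section VP2.
Variables (G : zmodType) (p : G -> R) (hp : is_value p).
Lemma vp_quad x1 x2 y1 y2 : p ((x1 - x2) - (y1 - y2)) <= p (x1 - y1) + p (x2 - y2).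
Proof. by rewrite I1 vpB. Qed.
Lemma vp_3 x1 x2 x3 y1 y2 y3 :
  p (x1 + x2 - x3) <= p (y1 + y2 - y3) + p (x1 - y1) + p (x2 - y2) + p (x3 - y3).
Proof.
rewrite (I3 x1 x2 x3 y1 y2 y3); apply: le_trans (vpD hp _ _) _.
have := vpB hp (x1 - y1 + (x2 - y2)) (x3 - y3); have := vpD hp (x1 - y1) (x2 - y2); lra.
Qed.
End VP2.

Lemma nle_up (x y e : R) : `|x - y| <= e -> x <= y + e.
Proof. by rewrite ler_norml => /andP [h1 h2]; lra. Qed.
Lemma nle_lo (x y e : R) : `|x - y| <= e -> y - e <= x.
Proof. by rewrite ler_norml => /andP [h1 h2]; lra. Qed.
Lemma nle_mk (x y e : R) : x <= y + e -> y - e <= x -> `|x - y| <= e.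
Proof. by move=> h1 h2; rewrite ler_norml; apply/andP; split; lra. Qed.

Section Limit.
Variables (G G' : zmodType) (p : G -> R) (p' : G' -> R) (S : G -> Prop) (T : G' -> Prop).
Hypotheses (hp : is_value p) (hp' : is_value p') (S0 : S 0)
  (SB : forall x y, S x -> S y -> S (x - y)).
Hypothesis Tcomp : forall u, (forall n, T (u n)) -> cauchy p' u -> exists2 l, T l & conv p' u l.
Variables (A : nat -> seq G) (f : nat -> G -> G') (B : nat -> seq G') (h : nat -> G' -> G).
Hypothesis ch : chain p p' S T A f B h.

Lemma nestA k m a : a \in A k -> (k <= m)%N -> a \in A m.
Proof.
move=> ha; elim: m => [|m IH]; first by rewrite leqn0 => /eqP <-.
rewrite leq_eqVlt => /orP [/eqP <- //|]; rewrite ltnS => /IH; exact: (c_Anest ch).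
Qed.

Lemma drift1 m a : a \in A m -> p' (f m.+1 a - f m a) <= 7 * eps_ m.
Proof.
move=> ha; have hb := c_fAB ch ha.
have ha' := c_hBA ch hb.
have ha1 := c_Anest ch ha.
have e : f m.+1 a - f m a = f m.+1 (a - h m (f m a)) + (f m.+1 (h m (f m a)) - f m a).
  by rewrite (addfB (c_A ch m.+1) (c_fadd (k:=m.+1) ch) ha1 ha') addrA subrK.
rewrite e; apply: le_trans (vpD hp' _ _) _.
have hd : a - h m (f m a) \in A m.+1 by case: (c_A ch m.+1) => _; apply.
have h1 := nle_up (c_fapp ch hd).
have h2 : p (a - h m (f m a)) <= 3 * eps_ m.
  by rewrite (vp_sym hp); have := c_hf ch ha; lra.
have h3 := c_fh ch hb.
have h4 := eps_S m; have h5 := eps_gt0 m.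
lra.
Qed.

Lemma drift k m a : a \in A k -> (k <= m)%N -> p' (f m a - f k a) <= 14 * (eps_ k - eps_ m).
Proof.
move=> ha; elim: m => [|m IH].
  by rewrite leqn0 => /eqP <-; rewrite subrr (vp0 hp') subrr mulr0.
rewrite leq_eqVlt => /orP [/eqP <-|]; first by rewrite subrr (vp0 hp') subrr mulr0.
rewrite ltnS => hkm; have ham := nestA ha hkm.
apply: le_trans (vp_tri hp' _ (f m a) _) _.
have := drift1 ham; have := IH hkm; have := eps_S m; lra.
Qed.

Lemma drift' k m a : a \in A k -> (k <= m)%N -> p' (f m a - f k a) <= 14 * eps_ k.
Proof. move=> ha hkm; have := drift ha hkm; have := eps_gt0 m; lra. Qed.

Lemma E2 k l a b : a \in A k -> b \in A l ->
  `|p' (f k a - f l b) - p (a - b)| <= 15 * (eps_ k + eps_ l).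
Proof.
move=> ha hb; set m := maxn k l.
have hkm : (k <= m)%N by apply: leq_maxl.
have hlm : (l <= m)%N by apply: leq_maxr.
have ham := nestA ha hkm; have hbm := nestA hb hlm.
have hab : a - b \in A m by case: (c_A ch m) => _; apply.
have h0 := c_fapp ch hab; rewrite (addfB (c_A ch m) (c_fadd (k:=m) ch) ham hbm) in h0.
have d1 := drift' ha hkm; have d2 := drift' hb hlm.
have em := eps_le hkm.
have L := vp_lip hp' (f k a - f l b) (f m a - f m b).
have Q := vp_quad hp' (f k a) (f l b) (f m a) (f m b).
rewrite (vp_sym hp' (f k a)) (vp_sym hp' (f l b)) in Q.
have h01 := nle_up h0; have h02 := nle_lo h0.
have L1 := nle_up L; have L2 := nle_lo L.
have := eps_gt0 l; move=> hl; apply: nle_mk; lra.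
Qed.

Lemma E3 k l n a b c : a \in A k -> b \in A l -> c \in A n ->
  p' (f k a + f l b - f n c) <= p (a + b - c) + 15 * (eps_ k + eps_ l + eps_ n).
Proof.
move=> ha hb hc; set m := maxn k (maxn l n).
have hkm : (k <= m)%N by apply: leq_maxl.
have hlm : (l <= m)%N by rewrite /m (leq_trans (leq_maxl l n)) // leq_maxr.
have hnm : (n <= m)%N by rewrite /m (leq_trans (leq_maxr l n)) // leq_maxr.
have ham := nestA ha hkm; have hbm := nestA hb hlm; have hcm := nestA hc hnm.
have hAm := c_A ch m; have hfm := c_fadd (k:=m) ch.
have habc : a + b - c \in A m by apply: (proj2 hAm) => //; apply: subgD.
have h0 := nle_up (c_fapp ch habc).
rewrite (addfB hAm hfm _ hcm) ?subgD // (hfm _ _ ham hbm) in h0.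
have d1 := drift' ha hkm; have d2 := drift' hb hlm; have d3 := drift' hc hnm.
rewrite (vp_sym hp') in d1; rewrite (vp_sym hp') in d2; rewrite (vp_sym hp') in d3.
have em := eps_le hkm.
have V := vp_3 hp' (f k a) (f l b) (f n c) (f m a) (f m b) (f m c).
have := eps_gt0 l; have := eps_gt0 n; lra.
Qed.


Lemma SDp x y : S x -> S y -> S (x + y).
Proof.
move=> hx hy; have hNy : S (- y) by have := SB S0 hy; rewrite add0r.
by have := SB hx hNy; rewrite opprK.
Qed.

Lemma approx_ex x j : S x ->
  exists km : nat * G, [/\ (j <= km.1)%N, km.2 \in A km.1 & p (x - km.2) < eps_ j].
Proof.
move=> hx; have [k [a ha hxa]] := c_Adense ch hx (eps_gt0 j).
exists (maxn k j, a); split => //=; first exact: leq_maxr.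
exact: nestA ha (leq_maxl _ _).
Qed.

Lemma limit : exists Phi : G -> G', [/\ (forall x, S x -> T (Phi x)),
   (forall x y, S x -> S y -> Phi (x + y) = Phi x + Phi y),
   (forall x, S x -> p' (Phi x) = p x) &
   (forall k a, a \in A k -> p' (Phi a - f k a) <= 16 * eps_ k)].
Proof.
have H0 : forall xj : G * nat, exists km : nat * G, S xj.1 ->
    [/\ (xj.2 <= km.1)%N, km.2 \in A km.1 & p (xj.1 - km.2) < eps_ xj.2].
  move=> [x j] /=; case: (classic (S x)) => hx.
    by have [km hkm] := approx_ex j hx; exists km.
  by exists (0%N, 0).
have [c0 hc0] := fchoice H0.
pose c x j := c0 (x, j).
have hc : forall x j, S x ->
    [/\ (j <= (c x j).1)%N, (c x j).2 \in A (c x j).1 & p (x - (c x j).2) < eps_ j].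
  by move=> x j hx; apply: (hc0 (x, j)).
pose u x j := f (c x j).1 (c x j).2.
have uT : forall x j, S x -> T (u x j).
  move=> x j hx; have [_ h2 _] := hc x j hx; exact: (c_BT ch (c_fAB ch h2)).
have U2 : forall x y i j, S x -> S y ->
    `|p' (u x i - u y j) - p (x - y)| <= 16 * (eps_ i + eps_ j).
  move=> x y i j hx hy; have [h1 h2 h3] := hc x i hx; have [h1' h2' h3'] := hc y j hy.
  have E := E2 h2 h2'.
  have e1 := eps_le h1; have e2 := eps_le h1'.
  have L := vp_lip hp ((c x i).2 - (c y j).2) (x - y).
  have Q := vp_quad hp ((c x i).2) ((c y j).2) x y.
  rewrite (vp_sym hp (c x i).2) (vp_sym hp (c y j).2) in Q.
  rewrite /u; apply: nle_mk.
  - have := nle_up E; have := nle_up L; lra.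
  - have := nle_lo E; have := nle_lo L; lra.
have U3 : forall x y z i, S x -> S y -> S z ->
    p' (u x i + u y i - u z i) <= p (x + y - z) + 48 * eps_ i.
  move=> x y z i hx hy hz.
  have [h1 h2 h3] := hc x i hx; have [h1' h2' h3'] := hc y i hy; have [h1'' h2'' h3''] := hc z i hz.
  have E := E3 h2 h2' h2''.
  have e1 := eps_le h1; have e2 := eps_le h1'; have e3 := eps_le h1''.
  have V := vp_3 hp ((c x i).2) ((c y i).2) ((c z i).2) x y z.
  rewrite (vp_sym hp (c x i).2) (vp_sym hp (c y i).2) (vp_sym hp (c z i).2) in V.
  rewrite /u; lra.
have cau : forall x, S x -> cauchy p' (u x).
  move=> x hx e he.
  have [N hN] := eps_small (divr_gt0 he (ltr0n R 32)).
  exists N => m n hm hn.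
  have := U2 x x m n hx hx; rewrite subrr (vp0 hp) subr0 ger0_norm ?(vp_ge0 hp') // => hh.
  have := eps_le hm; have := eps_le hn; lra.
have H1 : forall x, exists l, S x -> T l /\ conv p' (u x) l.
  move=> x; case: (classic (S x)) => hx.
    have [l hl1 hl2] := Tcomp (fun n => uT x n hx) (cau x hx).
    by exists l.
  by exists 0.
have [Phi hPhi] := fchoice H1.
have pick : forall x y z e, S x -> S y -> S z -> 0 < e -> exists j,
    [/\ eps_ j < e, p' (u x j - Phi x) < e, p' (u y j - Phi y) < e & p' (u z j - Phi z) < e].
  move=> x y z e hx hy hz he.
  have [N hN] := eps_small he.
  have [Mx hMx] := (proj2 (hPhi x hx)) e he.
  have [My hMy] := (proj2 (hPhi y hy)) e he.
  have [Mz hMz] := (proj2 (hPhi z hz)) e he.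
  exists (maxn N (maxn Mx (maxn My Mz))); split.
  - apply: le_lt_trans hN; apply: eps_le; exact: leq_maxl.
  - apply: hMx; lia.
  - apply: hMy; lia.
  - apply: hMz; lia.
have Iso2 : forall x y, S x -> S y -> p' (Phi x - Phi y) = p (x - y).
  move=> x y hx hy; apply: le_anti; apply/andP; split.
  - apply: (@close_eq_m _ _ 40) => // e he.
    have [j [ej e1 e2 _]] := pick x y x e hx hy hx he.
    have := nle_up (U2 x y j j hx hy).
    have Q := vp_quad hp' (Phi x) (Phi y) (u x j) (u y j).
    rewrite (vp_sym hp' (Phi x)) (vp_sym hp' (Phi y)) in Q.
    have := vp_lip1 hp' (Phi x - Phi y) (u x j - u y j).
    lra.
  - apply: (@close_eq_m _ _ 40) => // e he.
    have [j [ej e1 e2 _]] := pick x y x e hx hy hx he.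
    have := nle_lo (U2 x y j j hx hy).
    have Q := vp_quad hp' (u x j) (u y j) (Phi x) (Phi y).
    have := vp_lip1 hp' (u x j - u y j) (Phi x - Phi y).
    lra.
have Add : forall x y, S x -> S y -> Phi (x + y) = Phi x + Phi y.
  move=> x y hx hy; have hxy := SDp hx hy.
  suff : p' (Phi x + Phi y - Phi (x + y)) <= 0.
    move=> hh; have h0 : p' (Phi x + Phi y - Phi (x + y)) = 0.
      by apply: le_anti; rewrite hh vp_ge0.
    by have := vp_eq0 hp' h0; move/eqP; rewrite subr_eq0 => /eqP ->.
  apply: (@close_eq_m _ _ 60) => // e he.
  have [j [ej e1 e2 e3]] := pick x y (x + y) e hx hy hxy he.
  have V := vp_3 hp' (Phi x) (Phi y) (Phi (x + y)) (u x j) (u y j) (u (x + y) j).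
  rewrite (vp_sym hp' (Phi x)) (vp_sym hp' (Phi y)) (vp_sym hp' (Phi (x + y))) in V.
  have := U3 x y (x + y) j hx hy hxy; rewrite subrr (vp0 hp).
  lra.
have Phi0 : Phi 0 = 0 by apply: (addP0 S0 Add).
exists Phi; split.
- by move=> x hx; case: (hPhi x hx).
- exact: Add.
- by move=> x hx; have := Iso2 x 0 hx S0; rewrite Phi0 !subr0.
- move=> k a ha.
  have hSa := c_AS ch ha.
  apply: (@close_eq_m _ _ 20) => // e he.
  have [j [ej e1 _ _]] := pick a a a e hSa hSa hSa he.
  have [h1 h2 h3] := hc a j hSa.
  have E := nle_up (E2 h2 ha).
  have := eps_le h1; have := eps_gt0 k.
  rewrite (vp_sym hp) in h3.
  have := vp_tri hp' (Phi a) (u a j) (f k a).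
  rewrite /u in e1 *; rewrite (vp_sym hp') in e1.
  lra.
Qed.

End Limit.


Section Inverse.
Variables (G G' : zmodType) (p : G -> R) (p' : G' -> R) (S : G -> Prop) (T : G' -> Prop).
Hypotheses (hp : is_value p) (hp' : is_value p') (S0 : S 0)
  (SB : forall x y, S x -> S y -> S (x - y)) (T0 : T 0) (TB : forall x y, T x -> T y -> T (x - y)).
Variables (A : nat -> seq G) (f : nat -> G -> G') (B : nat -> seq G') (h : nat -> G' -> G).
Hypothesis ch : chain p p' S T A f B h.
Variables (Phi : G -> G') (Psi : G' -> G).
Hypotheses (PhiT : forall x, S x -> T (Phi x))
  (PhiAdd : forall x y, S x -> S y -> Phi (x + y) = Phi x + Phi y)
  (PhiIso : forall x, S x -> p' (Phi x) = p x)
  (Phif : forall k a, a \in A k -> p' (Phi a - f k a) <= 16 * eps_ k)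
  (PsiS : forall y, T y -> S (Psi y))
  (PsiAdd : forall x y, T x -> T y -> Psi (x + y) = Psi x + Psi y)
  (PsiIso : forall y, T y -> p (Psi y) = p' y)
  (Psih : forall k b, b \in B k -> p (Psi b - h k b) <= 16 * eps_ k).

Lemma inv_on_A k a : a \in A k -> Psi (Phi a) = a.
Proof.
move=> ha; have hSa := c_AS ch ha.
suff : p (Psi (Phi a) - a) <= 0.
  move=> hh; have h0 : p (Psi (Phi a) - a) = 0 by apply: le_anti; rewrite hh vp_ge0.
  by have := vp_eq0 hp h0; move/eqP; rewrite subr_eq0 => /eqP.
apply: (@close_eq_m _ _ 40) => // e he.
have [N hN] := eps_small he.
set m := maxn k N.
have ham : a \in A m by apply: (nestA ch ha); apply: leq_maxl.
have em : eps_ m <= eps_ N by apply: eps_le; apply: leq_maxr.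
have hb := c_fAB ch ham.
have Tb := c_BT ch hb.
have TPa := PhiT hSa.
have e1 : Psi (Phi a) - Psi (f m a) = Psi (Phi a - f m a) by rewrite (addPB T0 TB PsiAdd).
have h1 : p (Psi (Phi a) - Psi (f m a)) <= 16 * eps_ m.
  by rewrite e1 (PsiIso (TB TPa Tb)); have := Phif ham; lra.
have h2 := Psih hb.
have h3 := c_hf ch ham.
have t1 := vp_tri hp (Psi (Phi a)) (Psi (f m a)) a.
have t2 := vp_tri hp (Psi (f m a)) (h m (f m a)) a.
have := eps_gt0 m; lra.
Qed.

Lemma inv x : S x -> Psi (Phi x) = x.
Proof.
move=> hx.
suff : p (Psi (Phi x) - x) <= 0.
  move=> hh; have h0 : p (Psi (Phi x) - x) = 0 by apply: le_anti; rewrite hh vp_ge0.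
  by have := vp_eq0 hp h0; move/eqP; rewrite subr_eq0 => /eqP.
apply: (@close_eq_m _ _ 4) => // e he.
have [k [a ha hxa]] := c_Adense ch hx he.
have hSa := c_AS ch ha.
have t1 := vp_tri hp (Psi (Phi x)) (Psi (Phi a)) x.
have e1 : Psi (Phi x) - Psi (Phi a) = Psi (Phi (x - a)).
  by rewrite (addPB S0 SB PhiAdd) // (addPB T0 TB PsiAdd) //; apply: PhiT.
have hxa' : S (x - a) by apply: SB.
rewrite e1 (PsiIso (PhiT hxa')) (PhiIso hxa') (inv_on_A ha) in t1.
rewrite (vp_sym hp a) in t1.
have := vp_ge0 hp (x - a); lra.
Qed.
End Inverse.

Lemma dep_choice (St : Type) (P : nat -> St -> Prop) (Rl : nat -> St -> St -> Prop) :
  (exists s0, P 0%N s0) -> (forall k s, P k s -> exists s', P k.+1 s' /\ Rl k s s') ->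
  exists sq : nat -> St, forall k, P k (sq k) /\ Rl k (sq k) (sq k.+1).
Proof.
move=> [s0 hs0] H.
have H' : forall k (s : {s | P k s}), {s' | P k.+1 s' /\ Rl k (proj1_sig s) s'}.
  move=> k [s hs]; apply: constructive_indefinite_description; exact: H.
pose fix build k : {s | P k s} :=
  match k with
  | 0%N => exist _ s0 hs0
  | k'.+1 => let s' := H' k' (build k') in exist _ (proj1_sig s') (proj1 (proj2_sig s'))
  end.
exists (fun k => proj1_sig (build k)) => k; split; first exact: proj2_sig (build k).
by rewrite /= ; exact: (proj2 (proj2_sig (H' k (build k)))).
Qed.

Section Build.
Variables (r : option R) (hr : r = Some 1 \/ r = None) (M : nat) (hM : (1 < M)%N).
Variables (G : zmodType) (p : G -> R) (S : G -> Prop) (X : good r M p S).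
Variables (G' : zmodType) (p' : G' -> R) (T : G' -> Prop) (Y : good r M p' T).

Record inv_st (d : nat -> G) (e : nat -> G') (k : nat) (A : seq G) (f : G -> G') (B : seq G') (h : G' -> G) : Prop := InvSt {
  i_A : subg A; i_AS : forall a, a \in A -> S a;
  i_B : subg B; i_BT : forall b, b \in B -> T b;
  i_fadd : additive_on A f; i_fAB : forall a, a \in A -> f a \in B;
  i_fapp : forall a, a \in A -> `|p' (f a) - p a| <= eps_ k;
  i_hadd : additive_on B h; i_hS : forall b, b \in B -> S (h b);
  i_happ : forall b, b \in B -> `|p (h b) - p' b| <= eps_ k;
  i_hf : forall a, a \in A -> p (h (f a) - a) <= 3 * eps_ k;
  i_d : d k \in A; i_e : e k \in B }.

Lemma subg0 (H : zmodType) : subg [:: (0 : H)].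
Proof. by split => [|x y]; rewrite ?inE // => /eqP -> /eqP ->; rewrite subrr. Qed.

Lemma genX (l : seq G) : (forall x, x \in l -> S x) ->
  [/\ subg (gen M l), (forall z, z \in gen M l -> S z) & {subset l <= gen M l}].
Proof. exact: (@gen_prop G M S hM (g_S0 X) (g_SB X) (g_tor X) l). Qed.
Lemma genY (l : seq G') : (forall x, x \in l -> T x) ->
  [/\ subg (gen M l), (forall z, z \in gen M l -> T z) & {subset l <= gen M l}].
Proof. exact: (@gen_prop G' M T hM (g_S0 Y) (g_SB Y) (g_tor Y) l). Qed.

Variables (d : nat -> G) (dS : forall n, S (d n)) (e : nat -> G') (eT : forall n, T (e n)).
Hypotheses (dD : forall x, S x -> forall eps, 0 < eps -> exists n, p (x - d n) < eps)
  (eD : forall x, T x -> forall eps, 0 < eps -> exists n, p' (x - e n) < eps).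

Lemma init_state : exists A f B h, inv_st d e 0 A f B h.
Proof.
have hp := g_val X; have hp' := g_val Y.
have [hA0 hA0S hA0in] := genX (l := [:: d 0%N]) (fun x hx => ltac:(by move: hx; rewrite inE => /eqP ->)).
set A0 := gen M [:: d 0%N] in hA0 hA0S hA0in.
have z1 : forall c, c \in [:: (0 : G')] -> T c by move=> c; rewrite inE => /eqP ->; exact: g_S0 Y.
have z2 : additive_on [:: (0 : G')] (fun _ : G' => (0 : G)) by move=> x y _ _; rewrite addr0.
have z3 : forall a, a \in [:: (0 : G')] -> (fun _ : G' => (0 : G)) a \in A0 by move=> a _; case: hA0.
have z4 : forall a, a \in [:: (0 : G')] -> `|p ((fun _ : G' => (0 : G)) a) - p' a| <= 1.
  by move=> a; rewrite inE => /eqP ->; rewrite (vp0 hp) (vp0 hp') subrr normr0 ler01.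
have [f0 [f0add f0T f0app _]] := step hr Y X (subg0 G') hA0 z1 hA0S z2 z3 ltr01 z4 (eps_gt0 0).
have hl : forall x, x \in map f0 A0 ++ [:: e 0%N] -> T x.
  move=> x; rewrite mem_cat => /orP [/mapP [a ha ->]|]; first exact: f0T.
  by rewrite inE => /eqP ->.
have [hB0 hB0T hB0in] := genY hl.
set B0 := gen M _ in hB0 hB0T hB0in.
have fAB : forall a, a \in A0 -> f0 a \in B0.
  by move=> a ha; apply: hB0in; rewrite mem_cat map_f.
have [h0 [h0add h0S h0app h0f]] := step hr X Y hA0 hB0 hA0S hB0T f0add fAB (eps_gt0 0) f0app (eps_gt0 0).
exists A0, f0, B0, h0; split => //.
- move=> a ha; have := h0f a ha; lra.
- by apply: hA0in; rewrite mem_head.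
- by apply: hB0in; rewrite mem_cat mem_head orbT.
Qed.

Lemma next_state k A f B h : inv_st d e k A f B h ->
  exists A' f' B' h', inv_st d e k.+1 A' f' B' h' /\
   [/\ {subset A <= A'}, {subset B <= B'}, (forall b, b \in B -> h b \in A') &
       (forall b, b \in B -> p' (f' (h b) - b) <= 3 * eps_ k)].
Proof.
case=> iA iAS iB iBT ifadd ifAB ifapp ihadd ihS ihapp ihf id ie.
have hp := g_val X; have hp' := g_val Y.
have hl : forall x, x \in A ++ map h B ++ [:: d k.+1] -> S x.
  move=> x; rewrite !mem_cat => /or3P [/iAS //|/mapP [b hb ->]|]; first exact: ihS.
  by rewrite inE => /eqP ->.
have [hA' hA'S hA'in] := genX hl.
set A' := gen M _ in hA' hA'S hA'in.
have hBA' : forall b, b \in B -> h b \in A'.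
  by move=> b hb; apply: hA'in; rewrite !mem_cat map_f ?orbT.
have [f' [f'add f'T f'app f'h]] := step hr Y X iB hA' iBT hA'S ihadd hBA' (eps_gt0 k) ihapp (eps_gt0 k.+1).
have hl' : forall x, x \in B ++ map f' A' ++ [:: e k.+1] -> T x.
  move=> x; rewrite !mem_cat => /or3P [/iBT //|/mapP [a ha ->]|]; first exact: f'T.
  by rewrite inE => /eqP ->.
have [hB' hB'T hB'in] := genY hl'.
set B' := gen M _ in hB' hB'T hB'in.
have fAB' : forall a, a \in A' -> f' a \in B'.
  by move=> a ha; apply: hB'in; rewrite !mem_cat map_f ?orbT.
have [h' [h'add h'S h'app h'f]] := step hr X Y hA' hB' hA'S hB'T f'add fAB' (eps_gt0 k.+1) f'app (eps_gt0 k.+1).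
exists A', f', B', h'; split; first split => //.
- move=> a ha; have := h'f a ha; lra.
- by apply: hA'in; rewrite !mem_cat mem_head !orbT.
- by apply: hB'in; rewrite !mem_cat mem_head !orbT.
- split => //.
  + by move=> a ha; apply: hA'in; rewrite mem_cat ha.
  + by move=> b hb; apply: hB'in; rewrite mem_cat hb.
  + move=> b hb; have := f'h b hb; have := eps_S k; have := eps_gt0 k; lra.
Qed.

Lemma build_chain : exists A f B h, chain p p' S T A f B h.
Proof.
pose St := ((seq G * (G -> G')) * (seq G' * (G' -> G)))%type.
pose P k (s : St) := inv_st d e k s.1.1 s.1.2 s.2.1 s.2.2.
pose Rl k (s s' : St) := [/\ {subset s.1.1 <= s'.1.1}, {subset s.2.1 <= s'.2.1},
   (forall b, b \in s.2.1 -> s.2.2 b \in s'.1.1) &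
   (forall b, b \in s.2.1 -> p' (s'.1.2 (s.2.2 b) - b) <= 3 * eps_ k)].
have [sq hsq] : exists sq : nat -> St, forall k, P k (sq k) /\ Rl k (sq k) (sq k.+1).
  apply: dep_choice.
  - by have [A [f [B [h H]]]] := init_state; exists ((A, f), (B, h)).
  - move=> k [[A f] [B h]] H.
    have [A' [f' [B' [h' [H1 H2]]]]] := next_state H.
    by exists ((A', f'), (B', h')).
exists (fun k => (sq k).1.1), (fun k => (sq k).1.2), (fun k => (sq k).2.1), (fun k => (sq k).2.2).
split.
all: try (move=> k; case: (hsq k) => [[]]; by []).
- by move=> k; case: (hsq k) => _ [].
- by move=> k; case: (hsq k) => _ [].
- by move=> k; case: (hsq k) => _ [].
- by move=> k; case: (hsq k) => _ [].
- move=> x hx eps he; have [n hn] := dD hx he; exists n; exists (d n) => //.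
  by case: (hsq n) => [[]].
- move=> x hx eps he; have [n hn] := eD hx he; exists n; exists (e n) => //.
  by case: (hsq n) => [[]].
Qed.
End Build.


Theorem uniq_good (r : option R) (hr : r = Some 1 \/ r = None) (M : nat) (hM : (1 < M)%N)
  (G : zmodType) (p : G -> R) (S : G -> Prop) (X : good r M p S)
  (G' : zmodType) (p' : G' -> R) (T : G' -> Prop) (Y : good r M p' T) :
  exists (Phi : G -> G') (Psi : G' -> G),
   [/\ (forall x, S x -> T (Phi x)), (forall y, T y -> S (Psi y)),
       (forall x y, S x -> S y -> Phi (x + y) = Phi x + Phi y),
       (forall x y, T x -> T y -> Psi (x + y) = Psi x + Psi y) &
       (forall x, S x -> p' (Phi x) = p x)] /\
   [/\ (forall y, T y -> p (Psi y) = p' y),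
   (forall x, S x -> Psi (Phi x) = x) & (forall y, T y -> Phi (Psi y) = y)].
Proof.
have [d [dS dD]] := g_dense X.
have [e [eT eD]] := g_dense Y.
have [A [f [B [h ch]]]] := build_chain hr hM X Y dS eT dD eD.
have [Phi [PhiT PhiAdd PhiIso Phif]] := limit (g_val X) (g_val Y) (g_S0 X) (g_SB X) (g_comp Y) ch.
have [Psi [PsiS PsiAdd PsiIso Psih]] :=
  limit (g_val Y) (g_val X) (g_S0 Y) (g_SB Y) (g_comp X) (chain_shift ch).
exists Phi, Psi; split; first by split.
split => //.
- exact: (inv (g_val X) (g_S0 X) (g_SB X) (g_S0 Y) (g_SB Y) ch PhiT PhiAdd PhiIso Phif PsiAdd PsiIso Psih).
- apply: (inv (g_val Y) (g_S0 Y) (g_SB Y) (g_S0 X) (g_SB X) (chain_shift ch) PsiS PsiAdd PsiIso Psih PhiAdd PhiIso).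
  move=> k a ha; have := Phif _ _ ha; have := eps_le (leqnSn k); lra.
Qed.


Section NT.
Variables (s : nat) (Ns : 'I_s -> nat) (hNs2 : forall i, (2 <= Ns i)%N)
  (hcop : forall i j, i != j -> coprime (Ns i) (Ns j)).

Lemma L_cop (r : seq 'I_s) (P : pred 'I_s) i : (forall j, j \in r -> P j -> j != i) ->
  coprime (Ns i) (\prod_(j <- r | P j) Ns j).
Proof.
elim: r => [|j r IH] H; first by rewrite big_nil coprimen1.
rewrite big_cons; case: ifP => hP.
  rewrite coprimeMr hcop ?IH //; last by rewrite eq_sym; apply: H; rewrite ?mem_head.
  by move=> k hk; apply: H; rewrite inE hk orbT.
by apply: IH => k hk; apply: H; rewrite inE hk orbT.
Qed.

Lemma L_mod (r : seq 'I_s) a b : uniq r -> (forall j, a = b %[mod Ns j]) ->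
  a = b %[mod \prod_(j <- r) Ns j].
Proof.
elim: r => [|j r IH]; first by rewrite big_nil !modn1.
rewrite cons_uniq => /andP [hj hr] H; rewrite big_cons; apply/eqP.
have co : coprime (Ns j) (\prod_(k <- r) Ns k).
  apply: L_cop => k hk _; apply/eqP => e; move: hj; by rewrite -e hk.
by rewrite chinese_remainder // (H j) eqxx /= IH.
Qed.

Definition m2 i := (\prod_(j < s | j != i) Ns j)%N.
Definition ee i := chinese (Ns i) (m2 i) 1 0.
Definition NN := (\prod_(i < s) Ns i)%N.

Lemma co_m2 i : coprime (Ns i) (m2 i).
Proof. by apply: L_cop => j _ hj. Qed.

Lemma NN_split i : NN = (Ns i * m2 i)%N.
Proof. by rewrite /NN (bigD1 i) //=. Qed.

Lemma ee1 i : ee i = 1 %[mod Ns i].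
Proof. by rewrite /ee chinese_modl // co_m2. Qed.

Lemma ee_m2 i : (m2 i %| ee i)%N.
Proof. by rewrite /dvdn /ee chinese_modr ?co_m2 // mod0n. Qed.

Lemma ee_j i j : j != i -> (Ns j %| ee i)%N.
Proof.
move=> hji; apply: dvdn_trans (ee_m2 i).
by rewrite /m2 (bigD1 j) //= dvdn_mulr.
Qed.

Lemma ee_N i : (NN %| ee i * Ns i)%N.
Proof. by rewrite (NN_split i) mulnC dvdn_mul // ee_m2. Qed.

Lemma ee_sum : (\sum_(i < s) ee i)%N = 1 %[mod NN].
Proof.
apply: L_mod; first exact: index_enum_uniq.
move=> j; rewrite (bigD1 j) //=.
have h0 : ((\sum_(i < s | i != j) ee i) %% Ns j = 0)%N.
  apply/eqP; rewrite -/(dvdn _ _); apply: dvdn_sum => i hi; by apply: ee_j; rewrite eq_sym.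
by rewrite -modnDm h0 addn0 modn_mod ee1.
Qed.

Lemma NN_gt0 : (0 < NN)%N.
Proof. by apply: prodn_gt0 => i; apply: leq_trans (hNs2 i). Qed.
End NT.

Lemma good_tor (r : option R) (N M : nat) (G : zmodType) (p : G -> R) (hG : is_GG r N p)
  (hMN : (M %| N)%N) (hN : (0 < N)%N) (e : nat) (he1 : e = 1 %[mod M]) (heN : (N %| e * M)%N) :
  good r M p (fun x => x *+ M = 0).
Proof.
case: hG => [[hcomp [hval hsep hO0 hbd hexp]] hG2 _].
have hN0 : N <> 0%N by move=> h; move: hN; rewrite h.
have torN : forall x : G, x *+ N = 0 by move=> x; apply: hexp.
have mulN : forall (x : G) k, (N %| k)%N -> x *+ k = 0.
  by move=> x k hk; rewrite (mulrn_mod k (torN x)); move/eqP: hk => ->.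
have fixS : forall x : G, x *+ M = 0 -> x *+ e = x.
  by move=> x hx; rewrite (mulrn_mod e hx) he1 -(mulrn_mod 1 hx) mulr1n.
have ES : forall x : G, (x *+ e) *+ M = 0 by move=> x; rewrite -mulrnA; apply: mulN.
have hM0 : (0 < M)%N by apply: dvdn_gt0 hMN.
split => //.
- by rewrite mul0rn.
- by move=> x y hx hy; rewrite mulrnBl hx hy subrr.
- have [d hd] := hsep.
  exists (fun n => d n *+ e); split => //.
  move=> x hx eps he.
  have he' : 0 < eps / (e%:R + 1) by apply: divr_gt0 => //; have := ler0n R e; lra.
  have [n hn] := hd x _ he'; exists n.
  rewrite -{1}(fixS x hx) -mulrnBl.
  apply: le_lt_trans (vp_mulrn hval _ _) _.
  have hp0 := vp_ge0 hval (x - d n).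
  have e0 : 0 <= (e%:R : R) by [].
  have hh : eps / (e%:R + 1) * (e%:R + 1) = eps by rewrite divfK //; apply: lt0r_neq0; lra.
  nra.
- move=> u hu hcau; have [l hl] := hcomp u hcau.
  exists l => //.
  have hval' := hval.
  suff : p (l *+ M) <= 0.
    move=> hh; apply: (vp_eq0 hval); apply: le_anti; by rewrite hh vp_ge0.
  apply: (@close_eq_m _ _ (M%:R + 1)); first by have := ler0n R M; lra.
  move=> eps heps; have [n hn0] := hl eps heps; have hn := hn0 n (leqnn n).
  have e1 : l *+ M = (l - u n) *+ M by rewrite mulrnBl hu subr0.
  rewrite e1; apply: le_trans (vp_mulrn hval _ _) _.
  rewrite (vp_sym hval) in hn.
  have := ler0n R M; have := vp_ge0 hval (l - u n); nra.
- move=> H q hq hexpM hbdq K K0 KB phi phiadd phiiso eps heps.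
  have hexpN : exponent_cond H N.
    move=> _ x; rewrite -(divnK hMN) mulnC mulrnA hexpM ?mul0rn //.
    by move=> h; move: hM0; rewrite h.
  have [phi_e [a b c]] := hG2 H q hq hexpN hbdq K K0 KB phi phiadd phiiso eps heps.
  exists phi_e; split => // x.
  have ph0 : phi_e 0 = 0.
    have := a 0 0; rewrite addr0 => h0.
    by apply: (addrI (phi_e 0)); rewrite addr0 -h0.
  have phn : forall n, phi_e (x *+ n) = phi_e x *+ n.
    by elim=> [|n IH]; rewrite ?mulr0n // !mulrS a IH.
  rewrite -phn hexpM //; by move=> h; move: hM0; rewrite h.
Qed.


Lemma dchoice (I : Type) (Y : I -> Type) (P : forall i, Y i -> Prop) :
  (forall i, exists y : Y i, P i y) -> exists F : forall i, Y i, forall i, P i (F i).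
Proof.
move=> H; exists (fun i => proj1_sig (constructive_indefinite_description _ (H i))).
move=> i; exact: proj2_sig (constructive_indefinite_description _ (H i)).
Qed.

Lemma vp_sum (G : zmodType) (p : G -> R) (hp : is_value p) (s : nat) (w : 'I_s -> G) :
  p (\sum_(i < s) w i) <= \sum_(i < s) p (w i).
Proof.
apply: (big_ind2 (fun x y => p x <= y)); first by rewrite (vp0 hp).
  by move=> x1 y1 x2 y2 h1 h2; apply: le_trans (vpD hp _ _) _; lra.
by [].
Qed.

Theorem proposition4p9
  (r : option R) (hr : r = Some 1 \/ r = None)
  (s : nat) (Ns : 'I_s -> nat)
  (hNs2 : forall i, (2 <= Ns i)%N)
  (hcop : forall i j, i != j -> coprime (Ns i) (Ns j))
  (N : nat) (hN : N = (\prod_(i < s) Ns i)%N)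
  (G : zmodType) (p : G -> R) (hG : is_GG r N p)
  (Gs : 'I_s -> zmodType) (ps : forall i, Gs i -> R)
  (hGs : forall i, is_GG r (Ns i) (ps i)) :
  top_group_iso p ps.
Proof.
have hN0 : (0 < N)%N by rewrite hN; exact: NN_gt0 hNs2.
have hp : is_value p by case: hG => [[_ [h _ _ _ _]] _ _].
have torN : forall x : G, x *+ N = 0.
  case: hG => [[_ [_ _ _ _ h]] _ _] x; apply: h => e; move: hN0; by rewrite e.
have mulN : forall (x : G) k, (N %| k)%N -> x *+ k = 0.
  by move=> x k hk; rewrite (mulrn_mod k (torN x)); move/eqP: hk => ->.
pose e := ee Ns.
have NsN : forall i, (Ns i %| N)%N.
  by move=> i; rewrite hN; have := NN_split Ns i; rewrite /NN => ->; exact: dvdn_mulr.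
have Nspos : forall i, (0 < Ns i)%N by move=> i; apply: leq_trans (hNs2 i).
have XS : forall i, good r (Ns i) p (fun x => x *+ Ns i = 0).
  move=> i; apply: (good_tor hG (NsN i) hN0 (e := e i)); first exact: ee1.
  rewrite hN; exact: ee_N.
have YS : forall i, good r (Ns i) (ps i) (fun x => x *+ Ns i = 0).
  move=> i; apply: (good_tor (hGs i) (dvdnn _) (Nspos i) (e := 1%N)) => //.
  by rewrite mul1n.
have U : forall i, exists PP : (G -> Gs i) * (Gs i -> G),
   [/\ (forall x, x *+ Ns i = 0 -> PP.1 x *+ Ns i = 0),
       (forall y, y *+ Ns i = 0 -> PP.2 y *+ Ns i = 0),
       (forall x y, x *+ Ns i = 0 -> y *+ Ns i = 0 -> PP.1 (x + y) = PP.1 x + PP.1 y),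
       (forall x y, x *+ Ns i = 0 -> y *+ Ns i = 0 -> PP.2 (x + y) = PP.2 x + PP.2 y) &
       (forall x, x *+ Ns i = 0 -> ps i (PP.1 x) = p x)] /\
   [/\ (forall y, y *+ Ns i = 0 -> p (PP.2 y) = ps i y),
   (forall x, x *+ Ns i = 0 -> PP.2 (PP.1 x) = x) & (forall y, y *+ Ns i = 0 -> PP.1 (PP.2 y) = y)].
  move=> i; have [Phi [Psi H]] := uniq_good hr (hNs2 i) (XS i) (YS i).
  by exists (Phi, Psi).
have [F hF] := dchoice U.
pose Phi i := (F i).1; pose Psi i := (F i).2.
have torGs : forall i (y : Gs i), y *+ Ns i = 0.
  move=> i y; case: (hGs i) => [[_ [_ _ _ _ h]] _ _]; apply: h => h0; move: (Nspos i); by rewrite h0.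
have ES : forall i (x : G), (x *+ e i) *+ Ns i = 0.
  by move=> i x; rewrite -mulrnA; apply: mulN; rewrite hN; exact: ee_N.
have fixS : forall i (x : G), x *+ Ns i = 0 -> x *+ e i = x.
  by move=> i x hx; rewrite (mulrn_mod (e i) hx) (ee1 hcop) -(mulrn_mod 1 hx) mulr1n.
have zeroS : forall i j (x : G), j != i -> x *+ Ns j = 0 -> x *+ e i = 0.
  move=> i j x hji hx; rewrite (mulrn_mod (e i) hx).
  by move: (ee_j hcop hji); rewrite /dvdn => /eqP ->.
have sumE : forall x : G, \sum_(i < s) x *+ e i = x.
  move=> x; have hs := ee_sum hcop; rewrite /NN -hN in hs.
  by rewrite sumrMnr (mulrn_mod _ (torN x)) hs -(mulrn_mod 1 (torN x)) mulr1n.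
exists (fun x i => Phi i (x *+ e i)), (fun z => \sum_(i < s) Psi i (z i)); split.
- move=> x y i; rewrite mulrnDl.
  by case: (hF i) => [[_ _ hadd _ _] _]; apply: hadd; apply: ES.
- move=> x /=; rewrite -[RHS]sumE; apply: eq_bigr => i _.
  by case: (hF i) => [_ [_ hinv _]]; apply: hinv; apply: ES.
- move=> z; apply: functional_extensionality_dep => i /=.
  rewrite -sumrMnl (bigD1 i) //= big1.
    rewrite addr0 fixS.
      by case: (hF i) => [_ [_ _ hinv]]; apply: hinv; apply: torGs.
    by case: (hF i) => [[_ hS _ _ _] _]; apply: hS; apply: torGs.
  move=> j hji; apply: (zeroS i j) => //.
  by case: (hF j) => [[_ hS _ _ _] _]; apply: hS; apply: torGs.
- move=> x eps heps.
  pose E := ((\sum_(i < s) e i)%N%:R : R).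
  have E0 : 0 <= E by [].
  have eE : forall i, ((e i)%:R : R) <= E.
    move=> i; rewrite /E ler_nat (bigD1 i) //=; exact: leq_addr.
  have hd : 0 < eps / (E + 1) by apply: divr_gt0 => //; lra.
  exists (eps / (E + 1)) => // y hy i.
  case: (hF i) => [[hT _ hadd _ hiso] _].
  have S0i : (0 : G) *+ Ns i = 0 by rewrite mul0rn.
  have SBi : forall a b : G, a *+ Ns i = 0 -> b *+ Ns i = 0 -> (a - b) *+ Ns i = 0.
    by move=> a b ha hb; rewrite mulrnBl ha hb subrr.
  rewrite -(addPB S0i SBi hadd); [|exact: ES|exact: ES].
  rewrite -mulrnBl hiso; last exact: ES.
  apply: le_lt_trans (vp_mulrn hp _ _) _.
  have hp0 := vp_ge0 hp (y - x).
  have hh : eps / (E + 1) * (E + 1) = eps by rewrite divfK //; apply: lt0r_neq0; lra.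
  have := eE i; have := ler0n R (e i); nra.
- move=> y eps heps.
  have hd : 0 < eps / (s%:R + 1) by apply: divr_gt0 => //; have := ler0n R s; lra.
  exists (eps / (s%:R + 1)) => // z hz.
  rewrite -sumrB.
  have e1 : forall i, Psi i (z i) - Psi i (y i) = Psi i (z i - y i).
    move=> i; case: (hF i) => [[_ _ _ hadd _] _].
    have S0i : (0 : Gs i) *+ Ns i = 0 by rewrite mul0rn.
    have SBi : forall a b : Gs i, a *+ Ns i = 0 -> b *+ Ns i = 0 -> (a - b) *+ Ns i = 0.
      by move=> a b ha hb; rewrite mulrnBl ha hb subrr.
    by rewrite /Psi (addPB S0i SBi hadd) ?torGs.
  under eq_bigr => i _ do rewrite e1.
  apply: le_lt_trans (vp_sum hp _) _.
  have e2 : forall i, p (Psi i (z i - y i)) = ps i (z i - y i).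
    by move=> i; case: (hF i) => [_ [hiso _ _]]; apply: hiso; apply: torGs.
  under eq_bigr => i _ do rewrite e2.
  apply: le_lt_trans (_ : \sum_(i < s) (eps / (s%:R + 1)) < eps).
    by apply: ler_sum => i _; apply: ltW.
  rewrite sumr_const card_ord -[_ *+ s]mulr_natr.
  have hh : eps / (s%:R + 1) * (s%:R + 1) = eps.
    by rewrite divfK //; apply: lt0r_neq0; have := ler0n R s; lra.
  have := ler0n R s; nra.
Qed.
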